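(* There is no symmetric $2$-$(36,15,6)$ design admitting an automorphism of order two that fixes exactly $18$ points, and there is no symmetric $2$-$(36,15,6)$ design admitting an automorphism of order two that fixes exactly $14$ points. *)

(* Defs.v *)
From mathcomp Require Import all_boot all_fingroup.
Set Implicit Arguments. Unset Strict Implicit. Unset Printing Implicit Defensive.

Definition is_2design (T : finType) (v k lam : nat) (D : {set {set T}}) : Prop :=
  [/\ #|T| = v,
      (forall B, B \in D -> #|B| = k) &
      (forall x y : T, x != y ->
         #|[set B in D | (x \in B) && (y \in B)]| = lam)].

Definition symmetric_design (T : finType) (v k lam : nat) (D : {set {set T}}) : Prop :=
  is_2design v k lam D /\ #|D| = v.

Definition design_aut (T : finType) (D : {set {set T}}) (s : {perm T}) : Prop :=
  [set (s @: B) | B : {set T} in D] = D.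

Definition fixed_points (T : finType) (s : {perm T}) : {set T} := [set x | s x == x].

(* Main.v *)
Require Import Defs.
From mathcomp Require Import all_boot all_fingroup zify.
Set Implicit Arguments. Unset Strict Implicit. Unset Printing Implicit Defensive.

Lemma cardsum (U : finType) (D : {set U}) (P : pred U) :
  #|[set B in D | P B]| = \sum_(B in D) (P B : nat).
Proof. rewrite -sum1_card big_mkcond [RHS]big_mkcond /=. apply: eq_bigr => B _; rewrite inE. by case: (B \in D); case: (P B). Qed.

Lemma sumC1 (x : 'I_36) (c : nat) : \sum_(y | true && (y != x)) c = 35 * c.
Proof. rewrite sum_nat_const; congr (_ * _).
transitivity #|predC1 x|; last by rewrite cardC1 card_ord.
by apply: eq_card => y; rewrite !inE. Qed.

Lemma repl (D : {set {set 'I_36}})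
 (hk : forall B, B \in D -> \sum_x (x \in B : nat) = 15)
 (hl : forall x y : 'I_36, x != y -> \sum_(B in D) ((x \in B) && (y \in B) : nat) = 6)
 x : \sum_(B in D) (x \in B : nat) = 15.
Proof.
have E1 : \sum_y \sum_(B in D) ((x \in B) && (y \in B) : nat) = 15 * \sum_(B in D) (x \in B : nat).
  rewrite exchange_big big_distrr /=; apply: eq_bigr => B hB.
  case: (boolP (x \in B)) => hx /=.
    by rewrite muln1; exact: hk.
  by rewrite muln0 big1.
have E2 : \sum_y \sum_(B in D) ((x \in B) && (y \in B) : nat) = \sum_(B in D) (x \in B : nat) + 35 * 6.
  rewrite (bigD1 x) //=; congr (_ + _).
    by apply: eq_bigr => B _; rewrite andbb.
  rewrite -(sumC1 x 6); apply: eq_bigr => y hy; apply: hl; by rewrite eq_sym.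
lia.
Qed.

Lemma splitB0 (D : {set {set 'I_36}}) B0 (F : {set 'I_36} -> nat) : B0 \in D ->
  \sum_(B in D) F B = F B0 + \sum_(B in D | B != B0) F B.
Proof. by move=> h; rewrite (bigD1 B0). Qed.

Lemma sq12 n : 12 * n <= n * n + 36.
Proof. have [h|h] := leqP n 6.
  have -> : n * n + 36 = 12 * n + (6 - n) * (6 - n) by nia.
  by rewrite leq_addr.
have -> : n * n + 36 = 12 * n + (n - 6) * (n - 6) by nia.
by rewrite leq_addr. Qed.

Lemma sqeq (I : finType) (P : pred I) (a : I -> nat) :
  \sum_(i | P i) (a i * a i + 36) = \sum_(i | P i) (12 * a i) ->
  forall i, P i -> a i = 6.
Proof.
move=> h.
have h2 : \sum_(i | P i) (a i * a i + 36 - 12 * a i) == 0.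
  by rewrite sumnB ?h ?subnn // => i _; apply: sq12.
move: h2; rewrite sum_nat_eq0 => /forallP h3 i Pi.
have := h3 i; rewrite Pi /= => /eqP; have := sq12 (a i); nia.
Qed.

Lemma dual (D : {set {set 'I_36}})
 (hk : forall B, B \in D -> \sum_x (x \in B : nat) = 15)
 (hl : forall x y : 'I_36, x != y -> \sum_(B in D) ((x \in B) && (y \in B) : nat) = 6)
 (hv : \sum_(B in D) 1 = 36)
 B0 B1 : B0 \in D -> B1 \in D -> B1 != B0 -> \sum_x ((x \in B0) && (x \in B1) : nat) = 6.
Proof.
move=> h0 h1 h01.
have hr := repl hk hl.
pose a (B : {set 'I_36}) := \sum_x ((x \in B0) && (x \in B) : nat).
have hc : forall x y, \sum_(B in D | B != B0) ((x \in B) && (y \in B) : nat) + ((x \in B0) && (y \in B0)) = if x == y then 15 else 6.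
  move=> x y; rewrite addnC -splitB0 //.
  case: eqP => [->|/eqP ne]; last exact: hl.
  transitivity (\sum_(B in D) (y \in B : nat)); last exact: hr.
  by apply: eq_bigr => B _; rewrite andbb.
have hn : \sum_(B in D | B != B0) 1 = 35.
  by move: hv; rewrite (splitB0 (fun _ => 1) h0) => /= h; lia.
have S1 : \sum_(B in D | B != B0) a B = 210.
  rewrite /a exchange_big /=.
  rewrite (eq_bigr (fun x => (x \in B0 : nat) * 14)).
    by rewrite -big_distrl /= hk.
  move=> x _; have := hc x x; rewrite eqxx andbb.
  case: (boolP (x \in B0)) => hx h; rewrite ?hx /= in h *; last by rewrite big1 // => B _; rewrite (negbTE hx).
  transitivity (\sum_(B in D | B != B0) ((x \in B) && (x \in B) : nat)); last by apply/eqP; rewrite -(eqn_add2r 1) h.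
  by apply: eq_bigr => B _; case: (x \in B).
have S2 : \sum_(B in D | B != B0) (a B * a B) = 1260.
  transitivity (\sum_(B in D | B != B0) \sum_x \sum_y (((x \in B0) && (x \in B)) * ((y \in B0) && (y \in B)))).
    by apply: eq_bigr => B _; rewrite /a big_distrlr.
  rewrite exchange_big /=.
  rewrite (eq_bigr (fun x => (x \in B0 : nat) * (14 + 5 * 14))).
    by rewrite -big_distrl /= hk.
  move=> x _; rewrite exchange_big /=.
  case: (boolP (x \in B0)) => hx /=; last first.
    by rewrite big1 // => y _; rewrite big1.
  rewrite mul1n (bigD1 x) //=; congr (_ + _).
    have := hc x x; rewrite eqxx hx /= => h.
    transitivity (\sum_(B in D | B != B0) ((x \in B) && (x \in B) : nat)); last by apply/eqP; rewrite -(eqn_add2r 1) h.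
    by apply: eq_bigr => B _; case: (x \in B).
  rewrite (eq_bigr (fun y => (y \in B0 : nat) * 5)); last first.
    move=> y hy; have := hc x y; rewrite eq_sym (negbTE hy) hx /=.
    case: (y \in B0) => /= h; last by rewrite big1 // => B _; rewrite /= muln0.
    transitivity (\sum_(B in D | B != B0) ((x \in B) && (y \in B) : nat)); last by apply/eqP; rewrite -(eqn_add2r 1) h.
    by apply: eq_bigr => B _; case: (x \in B); case: (y \in B).
  rewrite -big_distrl /= mulnC; congr (_ * _).
  have := hk _ h0; rewrite (bigD1 x) //= hx => h.
  by apply/eqP; rewrite -(eqn_add2l 1) h.
have := sqeq (P := fun B => (B \in D) && (B != B0)) (a := a).
move=> /(_ _ B1); rewrite h1 h01; apply => //.
rewrite big_split /= S2 -big_distrr /= S1.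
by rewrite (eq_bigr (fun _ => 36 * 1)) // -big_distrr /= hn.
Qed.

Lemma even_inv (U : finType) (g : U -> U) (A : {set U}) :
  involutive g -> (forall a, (g a \in A) = (a \in A)) -> (forall a, a \in A -> g a != a) ->
  ~~ odd (\sum_(a in A) 1).
Proof.
move=> gK gA gne.
have ginj : injective g := inv_inj gK.
have E : \sum_(a in A) 1 = \sum_(a in A) (enum_rank a < enum_rank (g a) : nat) + \sum_(a in A) (enum_rank (g a) < enum_rank a : nat).
  rewrite -big_split /=; apply: eq_bigr => a aA.
  have : enum_rank a != enum_rank (g a).
    apply: contra (gne a aA) => /eqP h; apply/eqP; exact: (enum_rank_inj (esym h)).
  by rewrite -(inj_eq val_inj) /=; case: ltngtP.
have E2 : \sum_(a in A) (enum_rank (g a) < enum_rank a : nat) = \sum_(a in A) (enum_rank a < enum_rank (g a) : nat).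
  rewrite (reindex_inj ginj) /=; apply: eq_big => [b|b _]; first by rewrite gA.
  by rewrite gK.
by rewrite E E2 addnn odd_double.
Qed.

Lemma memsB (s : {perm 'I_36}) (hs : forall x, s (s x) = x) (B : {set 'I_36}) x :
  (x \in s @: B) = (s x \in B).
Proof.
apply/imsetP/idP => [[y yB ->]|h]; first by rewrite hs.
by exists (s x); rewrite ?hs.
Qed.

Lemma ssB (s : {perm 'I_36}) (hs : forall x, s (s x) = x) (B : {set 'I_36}) :
  s @: (s @: B) = B.
Proof. by apply/setP => x; rewrite !memsB // hs. Qed.

Definition Hyp (D : {set {set 'I_36}}) (s : {perm 'I_36}) : Prop :=
 [/\ (forall B, B \in D -> \sum_x (x \in B : nat) = 15),
     (forall x y : 'I_36, x != y -> \sum_(B in D) ((x \in B) && (y \in B) : nat) = 6),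
     \sum_(B in D) 1 = 36,
     (forall x, s (s x) = x) &
     (forall B, B \in D -> s @: B \in D)].

Lemma sumx1 : \sum_(x : 'I_36) 1 = 36.
Proof. by rewrite sum1_card card_ord. Qed.

Lemma fixcount D s : Hyp D s ->
  \sum_(B in D) (s @: B == B : nat) = \sum_x (s x == x : nat).
Proof.
case=> hk hl hv hs haut.
have E1 : \sum_(B in D) \sum_x ((x \in B) && (x \in s @: B) : nat) = 6 * \sum_(B in D) 1 + 9 * \sum_(B in D) (s @: B == B : nat).
  rewrite !big_distrr -big_split /=; apply: eq_bigr => B hB.
  case: eqP => [->|/eqP ne].
    rewrite (eq_bigr (fun x => (x \in B : nat))) ?hk // => x _; by rewrite andbb.
  by rewrite (dual hk hl hv hB (haut _ hB) ne).
have E2 : \sum_(B in D) \sum_x ((x \in B) && (x \in s @: B) : nat) = 6 * \sum_(x : 'I_36) 1 + 9 * \sum_x (s x == x : nat).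
  rewrite exchange_big /= !big_distrr -big_split /=; apply: eq_bigr => x _.
  transitivity (\sum_(B in D) ((x \in B) && (s x \in B) : nat)); first by apply: eq_bigr => B _; rewrite memsB.
  case: eqP => [->|/eqP ne].
    transitivity (\sum_(B in D) (x \in B : nat)); last exact: (repl hk hl).
    by apply: eq_bigr => B _; rewrite andbb.
  by rewrite hl // eq_sym.
rewrite hv in E1; rewrite sumx1 in E2; lia.
Qed.

Definition Sx (s : {perm 'I_36}) x (B : {set 'I_36}) := (x \in B) != (s x \in B).

Lemma Scount D s x : Hyp D s -> s x != x -> \sum_(B in D) (Sx s x B : nat) = 18.
Proof.
case=> hk hl hv hs haut ne.
have E : \sum_(B in D) ((x \in B : nat) + (s x \in B : nat)) = \sum_(B in D) ((Sx s x B : nat) + 2 * ((x \in B) && (s x \in B))).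
  by apply: eq_bigr => B _; rewrite /Sx; case: (x \in B); case: (s x \in B).
move: E; rewrite !big_split /= big1_eq !(repl hk hl) hl; first lia.
by rewrite eq_sym.
Qed.

Lemma S_NB (s : {perm 'I_36}) x (B : {set 'I_36}) : (forall x, s (s x) = x) -> Sx s x B -> s @: B != B.
Proof.
move=> hs; apply: contraL => /eqP e. by rewrite /Sx negbK -(memsB hs B x) e.
Qed.

Lemma NBcount D s : Hyp D s -> \sum_(B in D) (s @: B != B : nat) + \sum_x (s x == x : nat) = 36.
Proof.
move=> h; rewrite -(fixcount h); case: h => hk hl hv hs haut.
rewrite -big_split /=; transitivity (\sum_(B in D) 1); last exact: hv.
apply: eq_bigr => B _; by case: eqP.
Qed.

Lemma orth D s x y : Hyp D s -> s x != x -> y != x -> y != s x ->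
  4 %| \sum_(B in D) (Sx s x B && Sx s y B : nat).
Proof.
move=> h nx nyx nysx; case: (h) => hk hl hv hs haut.
pose P B := [&& Sx s x B, Sx s y B & (x \in B) == (y \in B)].
pose M B := [&& Sx s x B, Sx s y B & (x \in B) != (y \in B)].
have d1 : x != y by rewrite eq_sym.
have d2 : s x != s y by apply: contra nyx => /eqP e; rewrite -(hs x) e hs.
have d3 : x != s y by apply: contra nysx => /eqP e; rewrite e hs.
have d4 : s x != y by rewrite eq_sym.
have E : \sum_(B in D) (((x \in B) && (y \in B) : nat) + ((s x \in B) && (s y \in B) : nat) + M B)
   = \sum_(B in D) (((x \in B) && (s y \in B) : nat) + ((s x \in B) && (y \in B) : nat) + P B).
  apply: eq_bigr => B _; rewrite /P /M /Sx.
  by case: (x \in B); case: (y \in B); case: (s x \in B); case: (s y \in B).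
move: E; rewrite !big_split /= !hl // => EPM.
have E2 : \sum_(B in D) (Sx s x B && Sx s y B : nat) = \sum_(B in D) (P B : nat) + \sum_(B in D) (M B : nat).
  rewrite -big_split /=; apply: eq_bigr => B _; rewrite /P /M.
  by case: (Sx s x B); case: (Sx s y B); case: ((x \in B) == (y \in B)).
have ev : ~~ odd (\sum_(B in [set B in D | P B]) 1).
  apply: (@even_inv {set 'I_36} (fun B : {set 'I_36} => s @: B) [set B in D | P B]).
  - exact: ssB.
  - move=> B; rewrite !inE /P /Sx !memsB // !hs.
    case hB: (B \in D); last first.
      case hB': (s @: B \in D) => //; by move: (haut _ hB'); rewrite ssB // hB.
    rewrite (haut _ hB) /=.
    by case: (x \in B); case: (y \in B); case: (s x \in B); case: (s y \in B).
  - move=> B; rewrite inE => /andP [_ /and3P [hx _ _]]; exact: S_NB hx.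
have e3 : \sum_(B in [set B in D | P B]) 1 = \sum_(B in D) (P B : nat).
  by rewrite sum1_card cardsum.
rewrite e3 in ev.
have eMP : \sum_(B in D) (M B : nat) = \sum_(B in D) (P B : nat) by apply/eqP; rewrite -(eqn_add2l (6 + 6)) EPM.
rewrite E2 eMP addnn.
move: ev; set p := \sum_(B in D) (P B : nat) => ev.
have [k ->] : exists k, p = k.*2.
  by exists p./2; rewrite -[LHS]odd_double_half (negbTE ev).
by rewrite -!mul2n mulnA dvdn_mulr.
Qed.

Lemma sum_eq1 (x : 'I_36) : \sum_y (y == x : nat) = 1.
Proof. by rewrite (bigD1 x) //= eqxx big1 // => y /negbTE ->. Qed.

Lemma fixsplit (s : {perm 'I_36}) : \sum_x (s x != x : nat) + \sum_x (s x == x : nat) = 36.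
Proof. rewrite -big_split /=; transitivity (\sum_(x : 'I_36) 1); last exact: sumx1.
apply: eq_bigr => x _; by case: eqP. Qed.

Lemma Ycount (s : {perm 'I_36}) x : (forall x, s (s x) = x) -> s x != x ->
  \sum_y ((s y != y) && (y != x) && (y != s x) : nat) + 2 = \sum_y (s y != y : nat).
Proof.
move=> hs nx.
have E : \sum_y (((s y != y) && (y != x) && (y != s x) : nat) + (y == x : nat) + (y == s x : nat)) = \sum_y (s y != y : nat).
  apply: eq_bigr => y _.
  case: (eqVneq y x) => [->|nyx].
    by move: nx; rewrite [x == s x]eq_sym; case: (s x == x).
  case: (eqVneq y (s x)) => [->|nysx].
    by move: nx; rewrite hs [x == s x]eq_sym; case: (s x == x).
  by case: (s y != y).
by rewrite -E !big_split /= !sum_eq1 -addnA.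
Qed.

Lemma Sfix (s : {perm 'I_36}) y B : Sx s y B -> s y != y.
Proof. by apply: contraL => /eqP e; rewrite /Sx e eqxx. Qed.

Lemma Sbound D s x y : Hyp D s -> s x != x -> s y != y ->
  \sum_(B in D) (Sx s x B : nat) + \sum_(B in D) (Sx s y B : nat) <=
  \sum_(B in D) (Sx s x B && Sx s y B : nat) + \sum_(B in D) (s @: B != B : nat).
Proof.
case=> hk hl hv hs haut nx ny; rewrite -!big_split /=; apply: leq_sum => B _.
case: (boolP (Sx s x B)) => h1; first by rewrite (S_NB hs h1); case: (Sx s y B).
by case: (boolP (Sx s y B)) => h2 //=; rewrite (S_NB hs h2).
Qed.

Lemma Sle (D : {set {set 'I_36}}) (s : {perm 'I_36}) x y : \sum_(B in D) (Sx s x B && Sx s y B : nat) <= \sum_(B in D) (Sx s x B : nat).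
Proof. by apply: leq_sum => B _; case: (Sx s x B); rewrite /= ?leq_b1. Qed.

Lemma no18 D s : Hyp D s -> \sum_x (s x == x : nat) != 18.
Proof.
move=> h; case: (h) => hk hl hv hs haut; apply/eqP => f18.
have hN := NBcount h; rewrite f18 in hN.
have hf := fixsplit s; rewrite f18 in hf.
have [x nx] : exists x, s x != x.
  apply/existsP; apply: contraLR isT => /existsPn hn.
  move: hf; rewrite big1 // => y _; by rewrite (negbTE (hn y)).
have hY := Ycount hs nx.
have [y /andP [/andP [ny nyx] nysx]] : exists y, (s y != y) && (y != x) && (y != s x).
  apply/existsP; apply: contraLR isT => /existsPn hn.
  move: hY; rewrite big1 => [|z _]; last by rewrite (negbTE (hn z)).
  lia.
have := orth h nx nyx nysx.
have := Sbound h nx ny; have := Sle D s x y.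
rewrite (Scount h nx) (Scount h ny).
set K := \sum_(B in D) _ => h1 h2.
have -> : K = 18 by lia.
by [].
Qed.

Definition Zx (s : {perm 'I_36}) y (B : {set 'I_36}) := (s @: B != B) && ~~ Sx s y B.

Lemma Zcount D s x : Hyp D s -> s x != x ->
  \sum_(B in D) (Zx s x B : nat) + 18 = \sum_(B in D) (s @: B != B : nat).
Proof.
move=> h nx; have hS := Scount h nx.
have E : \sum_(B in D) ((Zx s x B : nat) + (Sx s x B : nat)) = \sum_(B in D) (s @: B != B : nat).
  apply: eq_bigr => B _.
  case: (boolP (Sx s x B)) => hS'; last by rewrite /Zx hS' andbT addn0.
  case: h => _ _ _ hs _; by rewrite /Zx hS' (S_NB hs hS').
by move: E; rewrite big_split /= hS.
Qed.

Lemma rowcount D s B : Hyp D s -> B \in D -> s @: B != B ->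
  \sum_y ((s y != y) && ~~ Sx s y B : nat) + 18 = \sum_y (s y != y : nat).
Proof.
case=> hk hl hv hs haut hB nB.
have R : \sum_y (Sx s y B : nat) = 18.
  have E : \sum_y ((y \in B : nat) + (y \in s @: B : nat)) = \sum_y ((Sx s y B : nat) + 2 * ((y \in B) && (y \in s @: B))).
    by apply: eq_bigr => y _; rewrite /Sx memsB //; case: (y \in B); case: (s y \in B).
  move: E; rewrite !big_split /= big1_eq hk // hk ?haut // (dual hk hl hv hB (haut _ hB) nB).
  lia.
have E : \sum_y (((s y != y) && ~~ Sx s y B : nat) + (Sx s y B : nat)) = \sum_y (s y != y : nat).
  apply: eq_bigr => y _.
  case: (boolP (Sx s y B)) => hS; last by rewrite andbT addn0.
  by rewrite (Sfix hS) /=.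
by move: E; rewrite big_split /= R.
Qed.

Lemma no14 D s : Hyp D s -> \sum_x (s x == x : nat) != 14.
Proof.
move=> h; case: (h) => hk hl hv hs haut; apply/eqP => f14.
have hN := NBcount h; rewrite f14 in hN.
have hf := fixsplit s; rewrite f14 in hf.
have [x nx] : exists x, s x != x.
  apply/existsP; apply: contraLR isT => /existsPn hn.
  move: hf; rewrite big1 // => y _; by rewrite (negbTE (hn y)).
have hY := Ycount hs nx.
pose Y y := (s y != y) && (y != x) && (y != s x).
have ZZ : forall y, Y y -> \sum_(B in D) (Zx s x B && Zx s y B : nat) = 2.
  move=> y /andP [/andP [ny nyx] nysx].
  have := orth h nx nyx nysx.
  have := Sbound h nx ny; have := Sle D s x y.
  rewrite (Scount h nx) (Scount h ny).
  have E : \sum_(B in D) ((Zx s x B && Zx s y B : nat) + (Sx s x B : nat) + (Sx s y B : nat)) =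
           \sum_(B in D) ((s @: B != B : nat) + (Sx s x B && Sx s y B : nat)).
    apply: eq_bigr => B _; rewrite /Zx.
    case: (boolP (Sx s x B)) => h1; first rewrite (S_NB hs h1).
      by case: (Sx s y B).
    case: (boolP (Sx s y B)) => h2; first by rewrite (S_NB hs h2).
    by rewrite !andbT !addn0; case: (_ != _).
  move: E; rewrite !big_split /= (Scount h nx) (Scount h ny).
  set K := \sum_(B in D) (Sx s x B && Sx s y B : nat).
  set Z := \sum_(B in D) _.
  move=> E h1 h2 /dvdnP [q hq].
  move: hN E h2; set N := \sum_(B in D) _ => hN E h2; lia.
have L1 : \sum_y (Y y : nat) * 2 = 40.
  have e20 : \sum_y (Y y : nat) = 20.
    by apply/eqP; rewrite -(eqn_add2r 2) hY -(eqn_add2r 14) hf.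
  by rewrite -big_distrl /= e20.
have L2 : \sum_y (Y y : nat) * 2 = \sum_y \sum_(B in D) ((Y y : nat) * (Zx s x B && Zx s y B)).
  apply: eq_bigr => y _; rewrite -big_distrr /=.
  by case: (boolP (Y y)) => hy //=; rewrite ZZ.
have L3 : \sum_(B in D) \sum_y ((Y y : nat) * (Zx s x B && Zx s y B)) <= \sum_(B in D) (Zx s x B : nat) * 4.
  apply: leq_sum => B hB.
  case: (boolP (Zx s x B)) => hz; last by rewrite big1 // => y _; rewrite /= muln0.
  have nB : s @: B != B by case/andP: hz.
  have := rowcount h hB nB; rewrite -hY => R.
  have e4 : \sum_y ((s y != y) && ~~ Sx s y B : nat) = 4 by lia.
  rewrite mul1n; apply: (@leq_trans (\sum_y ((s y != y) && ~~ Sx s y B : nat))); last by rewrite e4.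
  apply: leq_sum => y _.
  rewrite /Y /Zx nB /=.
  by case: (s y != y); case: (y != x); case: (y != s x); case: (Sx s y B).
have hZ := Zcount h nx.
move: L3; rewrite -exchange_big -L2 L1 -big_distrl /=.
move: hN hZ; set N := \sum_(B in D) (_ != _ : nat); set Z := \sum_(B in D) (Zx s x B : nat) => hN hZ; lia.
Qed.

Lemma cardsum2 (B : {set 'I_36}) : #|B| = \sum_x (x \in B : nat).
Proof. by rewrite -sum1_card big_mkcond. Qed.

Lemma toHyp (D : {set {set 'I_36}}) (s : {perm 'I_36}) :
  symmetric_design 36 15 6 D -> design_aut D s -> #[s]%g = 2 -> Hyp D s.
Proof.
move=> [[_ hk hl] hv] ha ho; split.
- by move=> B hB; rewrite -cardsum2 hk.
- by move=> x y nxy; rewrite -cardsum hl.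
- by rewrite sum1_card hv.
- move=> x; have := expg_order s; rewrite ho => e.
  by rewrite -permM -(expgS s 1) e perm1.
- by move=> B hB; rewrite -ha; apply: imset_f.
Qed.

Lemma fixcard (s : {perm 'I_36}) : #|fixed_points s| = \sum_x (s x == x : nat).
Proof.
rewrite /fixed_points -sum1_card big_mkcond /=; apply: eq_bigr => x _; by rewrite inE.
Qed.

Theorem mainTheorem2 :
  (~ exists (D : {set {set 'I_36}}) (s : {perm 'I_36}),
       [/\ symmetric_design 36 15 6 D, design_aut D s, #[s]%g = 2
         & #|fixed_points s| = 18]) /\
  (~ exists (D : {set {set 'I_36}}) (s : {perm 'I_36}),
       [/\ symmetric_design 36 15 6 D, design_aut D s, #[s]%g = 2
         & #|fixed_points s| = 14]).
Proof.
split=> -[D [s [h1 h2 h3 h4]]]; have h := toHyp h1 h2 h3; rewrite fixcard in h4.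
- by move: (no18 h); rewrite h4.
- by move: (no14 h); rewrite h4.
Qed.
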